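(* Let $S\subset\mathbb{R}^2$ be a set of $n>4$ points in general position. Then there exists a Radon partition $P$ of $S$ whose degree in the Radon partition graph $G_T[S,2]$ is exactly $n-3$.
   Context: A Radon partition of a finite set $S\subset\mathbb{R}^d$ is a partition of $S$ into two nonempty disjoint parts $P_1,P_2$ (unordered) with $\operatorname{conv}(P_1)\cap\operatorname{conv}(P_2)\neq\emptyset$. For two partitions $P,P'$ of $S$, the partition distance $D(P,P')$ is the minimum number of elements of $S$ that must be removed so that $P$ and $P'$ restricted to the remaining elements coincide. The Radon partition graph $G_T[S,2]$ has as vertices all Radon partitions of $S$, with an edge between $P$ and $P'$ if and only if $D(P,P')=1$. *)

(* Defs.v *)
(* Points of R^2 are row vectors 'rV[R]_2 over a realType R;
   a set S of n points is an injective labelling p : 'I_n -> 'rV[R]_2. *)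
From HB Require Import structures.
From mathcomp Require Import all_boot all_order all_algebra.
From mathcomp Require Import reals.
Set Implicit Arguments. Unset Strict Implicit. Unset Printing Implicit Defensive.
Import Order.TTheory GRing.Theory Num.Theory.
Local Open Scope ring_scope.

Section Radon.
Variables (R : realType) (n : nat).

Definition in_conv (p : 'I_n -> 'rV[R]_2) (A : {set 'I_n}) (x : 'rV[R]_2) : Prop :=
  exists w : 'I_n -> R,
    [/\ forall i, 0 <= w i,
        forall i, i \notin A -> w i = 0,
        \sum_i w i = 1
      & x = \sum_i w i *: p i].

Definition collinear3 (a b c : 'rV[R]_2) : bool :=
  (b ord0 0 - a ord0 0) * (c ord0 1 - a ord0 1)
  - (b ord0 1 - a ord0 1) * (c ord0 0 - a ord0 0) == 0.

Definition general_position (p : 'I_n -> 'rV[R]_2) : Prop :=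
  injective p /\
  forall i j k : 'I_n, i != j -> j != k -> i != k -> ~~ collinear3 (p i) (p j) (p k).

(* An (unordered) partition of the point set into two blocks is represented
   by its set of blocks P, with P a partition of the index set and #|P| = 2
   (so both blocks are nonempty). *)
Definition two_partition (P : {set {set 'I_n}}) : bool :=
  partition P [set: 'I_n] && (#|P| == 2)%N.

Definition radon_partition (p : 'I_n -> 'rV[R]_2) (P : {set {set 'I_n}}) : Prop :=
  two_partition P /\ exists x, forall B, B \in P -> in_conv p B x.

Definition restrict (P : {set {set 'I_n}}) (X : {set 'I_n}) : {set {set 'I_n}} :=
  [set B :&: X | B in P].

(* partition distance: minimal number of removed elements so that the
   restrictions coincide (removing everything always works) *)
Definition pdist (P Q : {set {set 'I_n}}) : nat :=
  \big[minn/n]_(X : {set 'I_n} | restrict P X == restrict Q X) #|~: X|.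

Definition radon_adj (p : 'I_n -> 'rV[R]_2) (P Q : {set {set 'I_n}}) : Prop :=
  radon_partition p Q /\ pdist P Q = 1%N.

End Radon.

(* Main.v *)
Require Import Defs.
From HB Require Import structures.
From mathcomp Require Import all_boot all_order all_algebra.
From mathcomp Require Import reals.
From mathcomp Require Import ring lra zify.
Set Implicit Arguments. Unset Strict Implicit. Unset Printing Implicit Defensive.
Import Order.TTheory GRing.Theory Num.Theory.

Section Comb.
Variable n : nat.
Implicit Types A B C X : {set 'I_n}.
Implicit Types P Q : {set {set 'I_n}}.

Definition part A : {set {set 'I_n}} := [set A; ~: A].
Definition tg A (x : 'I_n) : {set 'I_n} := [set y | (y \in A) != (y == x)].

Lemma in_part A B : (B \in part A) = (B == A) || (B == ~: A).
Proof. by rewrite !inE. Qed.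

Lemma part_C A : part (~: A) = part A.
Proof. by rewrite /part setCK /= setUC. Qed.

Lemma tgC A x : tg (~: A) x = ~: tg A x.
Proof. by apply/setP => y; rewrite !inE; case: (y \in A); case: (y == x). Qed.

Lemma two_part_part A : A != set0 -> A != setT -> two_partition (part A).
Proof.
move=> h0 hT; rewrite /two_partition /partition; apply/andP; split; [apply/and3P; split|].
- apply/eqP/setP => y; rewrite inE; apply/bigcupP.
  case: (boolP (y \in A)) => hy; first by exists A => //; rewrite !inE eqxx.
  by exists (~: A); rewrite ?inE ?eqxx ?orbT.
- apply/trivIsetP => B B'; rewrite !inE => /orP [] /eqP -> /orP [] /eqP -> //; rewrite ?eqxx //.
  + by move=> _; rewrite -setI_eq0 setICr.
  + by move=> _; rewrite -setI_eq0 setIC setICr.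
- rewrite !inE negb_or eq_sym h0 /=; apply: contra hT => /eqP h.
  by rewrite -(setCK A) -h setC0.
- suff hA : A != ~: A by rewrite cards2 hA.
  apply/negP => /eqP h.
  have [y hy] : exists y, y \in A by apply/set0Pn.
  by move: (hy); rewrite {1}h inE hy.
Qed.

Lemma two_part_inv P : two_partition P -> exists A, P = part A.
Proof.
move=> /andP [/and3P [/eqP hc ht h0] /cards2P [B [C [hBC hP]]]].
exists B; rewrite hP /part; congr [set _; _].
apply/setP => y; rewrite inE.
have hB : B \in P by rewrite hP !inE eqxx.
have hC : C \in P by rewrite hP !inE eqxx orbT.
case: (boolP (y \in B)) => hy /=.
- move/trivIsetP: ht => /(_ B C hB hC hBC) /disjoint_setI0 hd.
  apply/negP => hyC; have : y \in B :&: C by rewrite inE hy hyC.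
  by rewrite hd inE.
- have : y \in cover P by rewrite hc inE.
  move=> /bigcupP [D]; rewrite hP !inE => /orP [] /eqP -> //.
  by rewrite (negbTE hy).
Qed.

Lemma restrict_part A X : restrict (part A) X = [set A :&: X; ~: A :&: X].
Proof. by rewrite /restrict /part imsetU1 imset_set1. Qed.

Lemma restrictT P : restrict P setT = P.
Proof.
rewrite /restrict (eq_imset (g := id)) ?imset_id // => B; exact: setIT.
Qed.

Lemma bigmin_le (I : eqType) (r : seq I) (Pr : pred I) (F : I -> nat) m y :
  y \in r -> Pr y -> (\big[minn/m]_(i <- r | Pr i) F i <= F y)%N.
Proof.
elim: r => // a r IH; rewrite inE big_cons => /orP [/eqP <-|hy] hP.
  by rewrite hP geq_minl.
by case: (Pr a); [rewrite geq_min IH ?orbT | exact: IH].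
Qed.

Lemma pdist_le P Q X : restrict P X == restrict Q X -> (pdist P Q <= #|~: X|)%N.
Proof. by move=> h; rewrite /pdist; apply: bigmin_le; rewrite ?mem_index_enum. Qed.

Lemma pdist_ge1 P Q : (0 < n)%N -> P != Q -> (1 <= pdist P Q)%N.
Proof.
move=> hn hPQ; rewrite /pdist; apply: (big_ind (fun v => 1 <= v)%N) => //.
- by move=> a b ha hb; rewrite leq_min ha hb.
- move=> X hX; rewrite card_gt0; apply/set0Pn.
  case: (boolP [exists y, y \notin X]) => [/existsP [y hy]|].
    by exists y; rewrite inE.
  rewrite negb_exists => /forallP hall.
  have hXT : X = setT by apply/setP => y; rewrite inE; move: (hall y); rewrite negbK.
  by move: hX; rewrite hXT !restrictT (negbTE hPQ).
Qed.

Lemma pdist_attain P Q : pdist P Q != n ->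
  exists X, restrict P X == restrict Q X /\ pdist P Q = #|~: X|.
Proof.
rewrite /pdist; apply: (big_ind (fun v => v != n -> exists X, restrict P X == restrict Q X /\ v = #|~: X|)).
- by rewrite eqxx.
- move=> a b ha hb; case: (leqP a b) => hab //.
- by move=> X hX _; exists X.
Qed.

Lemma agree_off A C x : (forall y, y != x -> (y \in C) = (y \in A)) -> C = A \/ C = tg A x.
Proof.
move=> h; case hx: ((x \in C) == (x \in A)).
- left; apply/setP => y; case: (eqVneq y x) => [->|hy]; first exact/eqP.
  exact: h.
- right; apply/setP => y; rewrite inE; case: (eqVneq y x) => [->|hy].
  + by move/negbT: hx; case: (x \in C); case: (x \in A).
  + by rewrite h //; case: (y \in A).
Qed.

Lemma tg_neq A x : (1 < n)%N -> part (tg A x) != part A.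
Proof.
move=> hn; apply/negP => /eqP h.
have : tg A x \in part A by rewrite -h !inE eqxx.
have [y hyx] : exists y : 'I_n, y != x.
  case: (eqVneq x (Ordinal hn)) => [hx|hx]; last by exists (Ordinal hn); rewrite eq_sym.
  have h0 : (0 < n)%N by apply: (@ltn_trans 1).

  by exists (Ordinal h0); rewrite hx; apply/eqP => /(congr1 val).
rewrite !inE => /orP [] /eqP /setP.
- by move=> /(_ x); rewrite !inE eqxx; case: (x \in A).
- by move=> /(_ y); rewrite !inE (negbTE hyx); case: (y \in A).
Qed.

Lemma pd_flip A x : (1 < n)%N -> pdist (part A) (part (tg A x)) = 1%N.
Proof.
move=> hn; apply/eqP; rewrite eqn_leq; apply/andP; split.
- have -> : 1%N = #|~: (~: [set x])| by rewrite setCK cards1.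
  apply: pdist_le; rewrite !restrict_part; apply/eqP.
  congr [set _; _]; apply/setP => y; rewrite !inE;
    by case: (eqVneq y x) => //= _; case: (y \in A).
- apply: pdist_ge1; first by apply: ltn_trans hn.
  by rewrite eq_sym tg_neq.
Qed.

Lemma pd_inv A C : (1 < n)%N -> pdist (part A) (part C) = 1%N ->
  exists x, part C = part (tg A x).
Proof.
move=> hn h1.
have [X [hX hd]] : exists X, restrict (part A) X == restrict (part C) X /\
     pdist (part A) (part C) = #|~: X|.
  by apply: pdist_attain; rewrite h1; apply/eqP => hn1; move: hn; rewrite -hn1.
move: hd; rewrite h1 => /esym /eqP /cards1P [x hx].
have hXx : X = ~: [set x] by rewrite -hx setCK.
exists x.
have h0 : part C != part A.
  apply/negP => /eqP hD; have := pdist_le (P := part A) (Q := part C) (X := setT).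
  by rewrite h1 !restrictT hD eqxx setCT cards0 => /(_ isT).
move: hX; rewrite !restrict_part hXx => /eqP hR.
have : C :&: ~: [set x] \in [set A :&: ~: [set x]; ~: A :&: ~: [set x]].
  by rewrite hR !inE eqxx.
rewrite !inE => /orP [] /eqP /setP hCA.
- have ha : forall y, y != x -> (y \in C) = (y \in A).
    by move=> y hy; move: (hCA y); rewrite !inE hy !andbT.
  case: (agree_off ha) => hC; last by rewrite hC.
  by move: h0; rewrite hC eqxx.
- have ha : forall y, y != x -> (y \in C) = (y \in ~: A).
    by move=> y hy; move: (hCA y); rewrite !inE hy !andbT.
  case: (agree_off ha) => hC.
  + by move: h0; rewrite hC part_C eqxx.
  + by rewrite hC tgC part_C.
Qed.

End Comb.

Local Open Scope ring_scope.

Section Geo.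
Variable R : realType.

Definition X (z : 'rV[R]_2) := z ord0 0.
Definition Y (z : 'rV[R]_2) := z ord0 1.
Definition Dt (a b c : 'rV[R]_2) : R :=
  (X b - X a) * (Y c - Y a) - (Y b - Y a) * (X c - X a).

Lemma rv2P (u v : 'rV[R]_2) : X u = X v -> Y u = Y v -> u = v.
Proof.
move=> hx hy; apply/matrixP => a b; rewrite (ord1 a).
case: b => [[|[|m]]] Hb //.
- by have -> : Ordinal Hb = 0 by apply/val_inj.
- by have -> : Ordinal Hb = 1 by apply/val_inj.
Qed.

Lemma XD (u v : 'rV[R]_2) : X (u + v) = X u + X v. Proof. by rewrite /X mxE. Qed.
Lemma YD (u v : 'rV[R]_2) : Y (u + v) = Y u + Y v. Proof. by rewrite /Y mxE. Qed.
Lemma XZ a (u : 'rV[R]_2) : X (a *: u) = a * X u. Proof. by rewrite /X mxE. Qed.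
Lemma YZ a (u : 'rV[R]_2) : Y (a *: u) = a * Y u. Proof. by rewrite /Y mxE. Qed.

Lemma lt_abs_add (a b : R) : 0 < a * b -> `|a| < `|a + b|.
Proof.
move=> hab; have [ha|ha|ha] := ltgtP a 0; last by move: hab; rewrite ha mul0r ltxx.
- have hb : b < 0 by move: hab; rewrite nmulr_rgt0.
  rewrite !ltr0_norm //; lra.
- have hb : 0 < b by move: hab; rewrite pmulr_rgt0.
  rewrite !gtr0_norm //; lra.
Qed.

End Geo.

Section Main.
Variables (R : realType) (n : nat) (p : 'I_n -> 'rV[R]_2).
Hypothesis hn : (4 < n)%N.
Hypothesis gp : general_position p.

Definition D3 a b c := Dt (p a) (p b) (p c).

Lemma gpD a b c : a != b -> b != c -> a != c -> D3 a b c != 0.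
Proof. by move=> h1 h2 h3; have := gp.2 a b c h1 h2 h3. Qed.

Lemma le_sum_term (I : finType) (F : I -> R) a : (forall i, 0 <= F i) -> F a <= \sum_i F i.
Proof.
move=> h; rewrite (bigD1 a) //= lerDl; apply: sumr_ge0 => i _; exact: h.
Qed.

Lemma le2_sum (F : 'I_n -> 'I_n -> R) a b : (forall i j, 0 <= F i j) ->
  F a b <= \sum_i \sum_j F i j.
Proof.
move=> h; rewrite (bigD1 a) //= (bigD1 b) //= -addrA lerDl.
apply: addr_ge0; first by apply: sumr_ge0.
by apply: sumr_ge0 => i _; apply: sumr_ge0.
Qed.

Definition tt : R := 1 + \sum_(a : 'I_n) \sum_(b : 'I_n)
   `|X (p a) - X (p b)| / `|Y (p a) - Y (p b)|.
Definition phi (z : 'rV[R]_2) := X z + tt * Y z.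

Lemma S_ge0 : 0 <= \sum_(a : 'I_n) \sum_(b : 'I_n)
   `|X (p a) - X (p b)| / `|Y (p a) - Y (p b)|.
Proof. by apply: sumr_ge0 => a _; apply: sumr_ge0 => b _; apply: divr_ge0. Qed.

Lemma phi_inj a b : a != b -> phi (p a) != phi (p b).
Proof.
move=> hab; apply/eqP => h.
have hp : p a != p b by apply/eqP => /(gp.1 a b) /eqP; rewrite (negbTE hab).
have [hy|hy] := eqVneq (Y (p a)) (Y (p b)).
  move: h; rewrite /phi hy => /addIr hx.
  by move: hp; rewrite (rv2P hx hy) eqxx.
have hT : `|X (p a) - X (p b)| / `|Y (p a) - Y (p b)| <= tt - 1.
  rewrite /tt addrAC subrr add0r.
  apply: le2_sum => a0 b0; exact: divr_ge0.
have htt : 0 < tt by rewrite /tt; have := S_ge0; lra.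
have hx : X (p a) - X (p b) = tt * (Y (p b) - Y (p a)).
  by move: h; rewrite /phi => h; rewrite mulrBr; lra.
have hy0 : `|Y (p a) - Y (p b)| != 0 by rewrite normr_eq0 subr_eq0.
move: hT; rewrite hx normrM gtr0_norm // distrC mulfK //; lra.
Qed.

Definition ab a b c := D3 a b c / (phi (p b) - phi (p a)).

Lemma ab_sym a b c : ab a b c = ab b a c.
Proof.
rewrite /ab; have -> : D3 b a c = - D3 a b c by rewrite /D3 /Dt; ring.
by rewrite -[phi (p a) - _]opprB invrN mulrNN.
Qed.

Lemma ab_neq0 a b c : a != b -> b != c -> a != c -> ab a b c != 0.
Proof.
move=> h1 h2 h3; rewrite /ab mulf_eq0 negb_or gpD //= invr_eq0 subr_eq0 eq_sym.
exact: phi_inj.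
Qed.

Lemma plucker a b c d : D3 a b c * (phi (p d) - phi (p a)) =
  D3 a d c * (phi (p b) - phi (p a)) + D3 a b d * (phi (p c) - phi (p a)).
Proof. rewrite /D3 /Dt /phi; ring. Qed.

Lemma key i j k w : i != j -> i != k -> j != k -> w != i -> w != j -> w != k ->
  ab i j w * ab i k w < 0 -> `|ab i w k| < `|ab i j k|.
Proof.
move=> hij hik hjk hwi hwj hwk hneg.
set e := phi (p j) - phi (p i); set f := phi (p k) - phi (p i); set g := phi (p w) - phi (p i).
have he : e != 0 by rewrite subr_eq0 phi_inj // eq_sym.
have hf : f != 0 by rewrite subr_eq0 phi_inj // eq_sym.
have hg : g != 0 by rewrite subr_eq0 phi_inj.
set al := D3 i w k * e; set be := D3 i j w * f.
have hab : al * be = - (ab i j w * ab i k w) * (e * f) ^+ 2.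
  rewrite /al /be /ab -/e -/f /D3 /Dt; field; by rewrite he hf.
have hpos : 0 < al * be.
  rewrite hab pmulr_lgt0 ?oppr_gt0 //; rewrite exprn_even_gt0 //= mulf_neq0 //.
have := lt_abs_add hpos; rewrite -plucker -/g /al.
rewrite /ab -/e -/g !normf_div !normrM => h.
have hge : 0 < `|g| by rewrite normr_gt0.
have hee : 0 < `|e| by rewrite normr_gt0.
rewrite ltr_pdivrMr // mulrAC ltr_pdivlMr //.
Qed.

Definition sameSign3 (a b c : R) := (0 < a /\ 0 < b /\ 0 < c) \/ (a < 0 /\ b < 0 /\ c < 0).

Definition Cd i j k := forall w, w != i -> w != j -> w != k ->
  sameSign3 (ab i j w) (ab i k w) (ab j k w).

Lemma neqlt (x y : R) : x != y -> x < y \/ y < x.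
Proof. by rewrite Order.TotalTheory.neq_lt => /orP [h|h]; [left|right]. Qed.

Lemma exists_min : exists i j k, [/\ i != j, i != k, j != k &
  forall a b c, a != b -> a != c -> b != c -> `|ab i j k| <= `|ab a b c| ].
Proof.
have h0 : (0 < n)%N by lia. have h1 : (1 < n)%N by lia. have h2 : (2 < n)%N by lia.
pose t0 : ('I_n * 'I_n * 'I_n)%type := (Ordinal h0, Ordinal h1, Ordinal h2).
pose P := fun t : ('I_n * 'I_n * 'I_n)%type => [&& t.1.1 != t.1.2, t.1.1 != t.2 & t.1.2 != t.2].
pose F := fun t : ('I_n * 'I_n * 'I_n)%type => `|ab t.1.1 t.1.2 t.2|.
have Pt0 : P t0 by [].
case: (arg_minP F Pt0) => [[[i j] k]] /and3P [hij hik hjk] hmin.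
exists i, j, k; split => // a b c hab hac hbc.
by apply: (hmin (a, b, c)); apply/and3P.
Qed.

Lemma Cd_min i j k : i != j -> i != k -> j != k ->
  (forall a b c, a != b -> a != c -> b != c -> `|ab i j k| <= `|ab a b c|) ->
  Cd i j k.
Proof.
move=> hij hik hjk hmin w hwi hwj hwk.
have p1 : 0 < ab i j w * ab i k w.
  rewrite lt_def mulf_neq0 ?ab_neq0 // 1?eq_sym //=.
  rewrite leNgt; apply/negP => hn'.
  have := key hij hik hjk hwi hwj hwk hn'.
  by rewrite ltNge hmin // eq_sym.
have p2 : 0 < ab j i w * ab j k w.
  rewrite lt_def mulf_neq0 ?ab_neq0 // 1?eq_sym //=.
  rewrite leNgt; apply/negP => hn'.
  have hji : j != i by rewrite eq_sym.
  have := @key j i k w hji hjk hik hwj hwi hwk hn'.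
  by rewrite [ab j i k]ab_sym ltNge hmin // eq_sym.
rewrite ab_sym in p2.
move: p1 p2; set a := ab i j w; set b := ab i k w; set c := ab j k w => p1 p2.
have [ha|ha] : a < 0 \/ 0 < a.
  by apply: neqlt; rewrite /a ab_neq0 // eq_sym.
- right; split => //; split; [by move: p1; rewrite nmulr_rgt0 | by move: p2; rewrite nmulr_rgt0].
- left; split => //; split; [by move: p1; rewrite pmulr_rgt0 | by move: p2; rewrite pmulr_rgt0].
Qed.

Lemma Cd_12 i j k : Cd i j k -> Cd j i k.
Proof.
move=> h w h1 h2 h3; have := h w h2 h1 h3; rewrite /sameSign3 (ab_sym j i); tauto.
Qed.

Lemma Cd_23 i j k : Cd i j k -> Cd i k j.
Proof.
move=> h w h1 h2 h3; have := h w h1 h3 h2; rewrite /sameSign3 (ab_sym k j); tauto.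
Qed.


Lemma Cd_mid i j k : i != j -> i != k -> j != k -> Cd i j k ->
  exists i' j' k', [/\ i' != j', i' != k', j' != k', Cd i' j' k' &
     phi (p i') < phi (p k') < phi (p j')].
Proof.
move=> hij hik hjk h.
have hji : j != i by rewrite eq_sym.
have hki : k != i by rewrite eq_sym.
have hkj : k != j by rewrite eq_sym.
have [a1|a1] := neqlt (phi_inj hij); have [a2|a2] := neqlt (phi_inj hik);
  have [a3|a3] := neqlt (phi_inj hjk).
-
  exists i, k, j; split => //; [exact: Cd_23| by rewrite a1 a3].
-
  exists i, j, k; split => //; by rewrite a2 a3.
- by move: (lt_trans a1 a3); rewrite ltNge (ltW a2).
-
  exists k, j, i; split => //; [| by rewrite a2 a1].
  by apply: Cd_12; apply: Cd_23; apply: Cd_12.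
-
  exists j, k, i; split => //; [| by rewrite a1 a2].
  by apply: Cd_23; apply: Cd_12.
- by move: (lt_trans a3 a1); rewrite ltNge (ltW a2).
-
  exists j, i, k; split => //; [exact: Cd_12| by rewrite a3 a2].
-
  exists k, i, j; split => //; [| by rewrite a3 a1].
  by apply: Cd_23; apply: Cd_12; apply: Cd_23; apply: Cd_12.
Qed.

Lemma ss_scale a b c x y z : 0 < x -> 0 < y -> 0 < z -> sameSign3 a b c ->
  sameSign3 (a * x) (b * y) (c * z).
Proof.
move=> hx hy hz [[ha [hb hc]]|[ha [hb hc]]].
- by left; rewrite !mulr_gt0.
- by right; rewrite !pmulr_llt0.
Qed.

Definition core i j k := [/\ i != j, i != k, j != k, 0 < D3 i j k &
  forall w, w != i -> w != j -> w != k ->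
    sameSign3 (D3 i j w) (D3 i k w) (D3 k j w)].

Lemma core_exists : exists i j k, core i j k.
Proof.
have [i0 [j0 [k0 [h1 h2 h3 hm]]]] := exists_min.
have [i [j [k [hij hik hjk hC /andP [hik' hkj']]]]] := Cd_mid h1 h2 h3 (Cd_min h1 h2 h3 hm).
have hS : forall w, w != i -> w != j -> w != k ->
    sameSign3 (D3 i j w) (D3 i k w) (D3 k j w).
  move=> w hwi hwj hwk.
  have e1 : 0 < phi (p j) - phi (p i) by rewrite subr_gt0 (lt_trans hik' hkj').
  have e2 : 0 < phi (p k) - phi (p i) by rewrite subr_gt0.
  have e3 : 0 < phi (p j) - phi (p k) by rewrite subr_gt0.
  have := ss_scale e1 e2 e3 (hC w hwi hwj hwk).
  rewrite (ab_sym j k) /ab !divfK //; by rewrite gt_eqF.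
have hD : D3 i j k != 0 by rewrite gpD.
have [hn'|hp] := neqlt hD.
- exists j, i, k; split => //; first by rewrite eq_sym.
  + have -> : D3 j i k = - D3 i j k by rewrite /D3 /Dt; ring.
    by rewrite oppr_gt0.
  + move=> w hwj hwi hwk; have := hS w hwi hwj hwk.
    have -> : D3 j i w = - D3 i j w by rewrite /D3 /Dt; ring.
    have -> : D3 j k w = - D3 k j w by rewrite /D3 /Dt; ring.
    have -> : D3 k i w = - D3 i k w by rewrite /D3 /Dt; ring.
    rewrite /sameSign3 !oppr_gt0 !oppr_lt0; tauto.
- by exists i, j, k; split.
Qed.

Lemma sum_ind_v (c : R) a (v : 'I_n -> 'rV[R]_2) :
  \sum_m ((c * (m == a)%:R) *: v m) = c *: v a.
Proof.
rewrite (bigD1 a) //= eqxx mulr1 big1 ?addr0 // => m /negbTE ->.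
by rewrite mulr0 scale0r.
Qed.

Lemma sum_ind_s (c : R) a : \sum_(m : 'I_n) (c * (m == a)%:R) = c.
Proof.
rewrite (bigD1 a) //= eqxx mulr1 big1 ?addr0 // => m /negbTE ->.
by rewrite mulr0.
Qed.

Lemma in_conv3 (B : {set 'I_n}) a b c (al be ga : R) :
  a \in B -> b \in B -> c \in B -> 0 <= al -> 0 <= be -> 0 <= ga ->
  al + be + ga = 1 -> in_conv p B (al *: p a + be *: p b + ga *: p c).
Proof.
move=> ha hb hc h1 h2 h3 hs.
exists (fun m => al * (m == a)%:R + be * (m == b)%:R + ga * (m == c)%:R); split.
- by move=> m; rewrite !addr_ge0 // mulr_ge0.
- move=> m hm.
  have -> : (m == a) = false by apply/negbTE; apply: contraNneq hm => ->.
  have -> : (m == b) = false by apply/negbTE; apply: contraNneq hm => ->.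
  have -> : (m == c) = false by apply/negbTE; apply: contraNneq hm => ->.
  by rewrite !mulr0 !addr0.
- by rewrite !big_split /= !sum_ind_s.
- by rewrite (eq_bigr (fun m => (al * (m == a)%:R) *: p m + (be * (m == b)%:R) *: p m
     + (ga * (m == c)%:R) *: p m)) ?big_split /= ?sum_ind_v // => m _; rewrite !scalerDl.
Qed.

Lemma in_conv1 (B : {set 'I_n}) a : a \in B -> in_conv p B (p a).
Proof.
move=> ha; have := in_conv3 ha ha ha ler01 (lexx 0) (lexx 0).
by rewrite !scale0r !addr0 scale1r; apply.
Qed.

Lemma X_sum (w : 'I_n -> R) : X (\sum_m w m *: p m) = \sum_m w m * X (p m).
Proof. by rewrite /X summxE; apply: eq_bigr => m _; rewrite mxE. Qed.
Lemma Y_sum (w : 'I_n -> R) : Y (\sum_m w m *: p m) = \sum_m w m * Y (p m).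
Proof. by rewrite /Y summxE; apply: eq_bigr => m _; rewrite mxE. Qed.

Lemma Dt_sum (u v : 'rV[R]_2) (w : 'I_n -> R) : \sum_m w m = 1 ->
  Dt u v (\sum_m w m *: p m) = \sum_m w m * Dt u v (p m).
Proof.
move=> hs.
have E : forall m, w m * Dt u v (p m) = (X v - X u) * (w m * Y (p m))
   - (Y v - Y u) * (w m * X (p m)) + ((Y v - Y u) * X u - (X v - X u) * Y u) * w m.
  by move=> m; rewrite /Dt; ring.
rewrite (eq_bigr _ (fun m _ => E m)) big_split /= sumrB -!mulr_sumr hs.
rewrite /Dt X_sum Y_sum; ring.
Qed.

Lemma conv_zero (C : {set 'I_n}) x (h : 'rV[R]_2 -> R) :
  (forall w : 'I_n -> R, \sum_m w m = 1 -> h (\sum_m w m *: p m) = \sum_m w m * h (p m)) ->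
  (forall m, m \in C -> 0 <= h (p m)) -> in_conv p C x -> h x <= 0 ->
  in_conv p [set m in C | h (p m) == 0] x.
Proof.
move=> hlin hC [w [w0 wC ws ->]] hle.
have ht : forall m, 0 <= w m * h (p m).
  move=> m; case: (boolP (m \in C)) => hm; first by rewrite mulr_ge0 // hC.
  by rewrite wC // mul0r.
have hz : \sum_m w m * h (p m) == 0.
  by rewrite eq_le sumr_ge0 ?andbT // -hlin.
have {}hz := psumr_eq0P (fun m _ => ht m) (eqP hz).
exists w; split => // m; rewrite inE negb_and => /orP [hm|hm]; first by rewrite wC.
by have := hz m isT; move/eqP; rewrite mulf_eq0 (negbTE hm) orbF => /eqP.
Qed.

Lemma conv_single (Z : {set 'I_n}) x a : in_conv p Z x ->
  (forall m, m \in Z -> m = a) -> x = p a.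
Proof.
move=> [w [w0 wZ ws ->]] hZ.
have hw : forall m, m != a -> w m = 0.
  by move=> m hm; apply: wZ; apply: contra hm => /hZ ->.
have wa : w a = 1.
  by rewrite -ws (bigD1 a) //= big1 ?addr0 // => m /hw.
by rewrite (bigD1 a) //= big1 ?addr0 ?wa ?scale1r // => m /hw ->; rewrite scale0r.
Qed.

Lemma conv_empty (Z : {set 'I_n}) x : in_conv p Z x -> (forall m, m \notin Z) -> False.
Proof.
move=> [w [w0 wZ ws _]] hZ.
by move: ws; rewrite big1 // => [/eqP|m _]; [rewrite eq_sym oner_eq0 | rewrite wZ].
Qed.

Lemma conv_nonneg (C : {set 'I_n}) x (h : 'rV[R]_2 -> R) :
  (forall w : 'I_n -> R, \sum_m w m = 1 -> h (\sum_m w m *: p m) = \sum_m w m * h (p m)) ->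
  (forall m, m \in C -> 0 <= h (p m)) -> in_conv p C x -> 0 <= h x.
Proof.
move=> hlin hC [w [w0 wC ws ->]]; rewrite hlin //; apply: sumr_ge0 => m _.
case: (boolP (m \in C)) => hm; first by rewrite mulr_ge0 // hC.
by rewrite wC // mul0r.
Qed.

Lemma sep_main (u v : 'rV[R]_2) (C : {set 'I_n}) x :
  (forall m, m \in C -> 0 <= Dt u v (p m)) ->
  (forall m, m \in ~: C -> Dt u v (p m) <= 0) ->
  in_conv p C x -> in_conv p (~: C) x ->
  in_conv p [set m in C | Dt u v (p m) == 0] x /\
  in_conv p [set m in ~: C | - Dt u v (p m) == 0] x.
Proof.
move=> hC hC' c1 c2.
have l1 : forall w : 'I_n -> R, \sum_m w m = 1 ->
   Dt u v (\sum_m w m *: p m) = \sum_m w m * Dt u v (p m) by move=> w; exact: Dt_sum.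
have l2 : forall w : 'I_n -> R, \sum_m w m = 1 ->
   - Dt u v (\sum_m w m *: p m) = \sum_m w m * - Dt u v (p m).
  by move=> w hw; rewrite Dt_sum // -sumrN; apply: eq_bigr => m _; rewrite mulrN.
have g1 := conv_nonneg l1 hC c1.
have hN : forall m, m \in ~: C -> 0 <= (fun z => - Dt u v z) (p m).
  by move=> m hm /=; rewrite oppr_ge0 hC'.
have g2 := conv_nonneg (h := fun z => - Dt u v z) l2 hN c2.
split.
- apply: (conv_zero l1 hC c1); rewrite /= oppr_ge0 in g2; exact: g2.
- apply: (conv_zero (h := fun z => - Dt u v z) l2 hN c2).
  by rewrite /= oppr_le0.
Qed.

Lemma R1 (C : {set 'I_n}) i j k u : i \in C -> j \in C -> u \in C -> k \notin C ->
  0 < D3 i j k -> 0 < D3 i j u -> 0 < D3 i k u -> 0 < D3 k j u ->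
  exists x, in_conv p C x /\ in_conv p (~: C) x.
Proof.
move=> hi hj hu hk d1 d2 d3 d4; exists (p k); split; last by apply: in_conv1; rewrite inE.
set De := D3 i j u.
have hDe : De != 0 by rewrite gt_eqF.
have := in_conv3 (al := D3 k j u / De) (be := D3 i k u / De) (ga := D3 i j k / De) hi hj hu.
have e : p k = (D3 k j u / De) *: p i + (D3 i k u / De) *: p j + (D3 i j k / De) *: p u.
  apply: rv2P; rewrite ?XD ?XZ ?YD ?YZ /De /D3 /Dt; field; exact: hDe.
rewrite -e; apply; rewrite ?divr_ge0 ?ltW //.
rewrite -!mulrDl; have -> : D3 k j u + D3 i k u + D3 i j k = De by rewrite /De /D3 /Dt; ring.
exact: divff.
Qed.

Lemma R2 (C : {set 'I_n}) i j k l : i \in C -> j \in C -> k \notin C -> l \notin C ->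
  0 < D3 i j k -> D3 i j l < 0 -> D3 i k l < 0 -> D3 k j l < 0 ->
  exists x, in_conv p C x /\ in_conv p (~: C) x.
Proof.
move=> hi hj hk hl d1 d2 d3 d4.
have a1 : 0 < D3 k l j.
  have -> : D3 k l j = - D3 k j l by rewrite /D3 /Dt; ring.
  by rewrite oppr_gt0.
have a2 : D3 k l i < 0.
  by have -> : D3 k l i = D3 i k l by rewrite /D3 /Dt; ring.
set De := D3 k l j - D3 k l i.
have hDe : 0 < De by rewrite /De; lra.
set De1 := D3 i j k - D3 i j l.
have hDe1 : 0 < De1 by rewrite /De1; lra.
have hk' : k \in ~: C by rewrite inE.
have hl' : l \in ~: C by rewrite inE.
exists ((D3 k l j / De) *: p i + (- D3 k l i / De) *: p j + 0 *: p j); split.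
  apply: in_conv3 => //; rewrite ?divr_ge0 ?ltW ?oppr_gt0 //.
  by rewrite addr0 -mulrDl -/De divff // gt_eqF.
have e : (D3 k l j / De) *: p i + (- D3 k l i / De) *: p j + 0 *: p j =
   (- D3 i j l / De1) *: p k + (D3 i j k / De1) *: p l + 0 *: p l.
  apply: rv2P; rewrite ?XD ?XZ ?YD ?YZ /De /De1 /D3 /Dt; field.
  1-2: exact: (lt0r_neq0 hDe1).
rewrite e; apply: in_conv3 => //; rewrite ?divr_ge0 ?ltW ?oppr_gt0 //.
by rewrite addr0 -mulrDl addrC -/De1 divff // gt_eqF.
Qed.

Section Final.
Variables (i j k : 'I_n).
Hypothesis hc : core i j k.

Definition Aset : {set 'I_n} :=
  [set w | [|| w == i, w == j | (w != k) && (0 < D3 i j w)]].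
Definition Wset : {set 'I_n} := ~: [set i; j; k].

Lemma hij : i != j. Proof. by case: hc. Qed.
Lemma hik : i != k. Proof. by case: hc. Qed.
Lemma hjk : j != k. Proof. by case: hc. Qed.
Lemma hDijk : 0 < D3 i j k. Proof. by case: hc. Qed.

Lemma inW m : (m \in Wset) = [&& m != i, m != j & m != k].
Proof. by rewrite !inE !negb_or andbA. Qed.

Lemma iA : i \in Aset. Proof. by rewrite inE eqxx. Qed.
Lemma jA : j \in Aset. Proof. by rewrite inE eqxx orbT. Qed.
Lemma kA : k \notin Aset.
Proof. by rewrite inE eqxx /= ?orbF !(eq_sym k) (negbTE hik) (negbTE hjk). Qed.

Lemma sgnW m : m \in Wset ->
  (m \in Aset /\ [/\ 0 < D3 i j m, 0 < D3 i k m & 0 < D3 k j m]) \/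
  (m \notin Aset /\ [/\ D3 i j m < 0, D3 i k m < 0 & D3 k j m < 0]).
Proof.
rewrite inW => /and3P [h1 h2 h3].
have hA : (m \in Aset) = (0 < D3 i j m) by rewrite inE (negbTE h1) (negbTE h2) h3.
case: hc => _ _ _ _ /(_ m h1 h2 h3) [[a1 [a2 a3]]|[a1 [a2 a3]]].
- by left; rewrite hA.
- by right; rewrite hA -leNgt ltW.
Qed.

Lemma radonC (C : {set 'I_n}) y : i \in C -> j \in C -> k \notin C -> y \in Wset ->
  (y \in C) = (y \in Aset) -> exists x, in_conv p C x /\ in_conv p (~: C) x.
Proof.
move=> hi hj hk hy hyC.
case: (sgnW hy) => [[hA [a1 a2 a3]]|[hA [a1 a2 a3]]].
- by apply: (R1 hi hj _ hk hDijk a1 a2 a3); rewrite hyC.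
- by apply: (R2 hi hj hk _ hDijk a1 a2 a3); rewrite hyC.
Qed.

Lemma radon_part (C : {set 'I_n}) : i \in C -> k \notin C ->
  (exists x, in_conv p C x /\ in_conv p (~: C) x) -> radon_partition p (part C).
Proof.
move=> hi hk [x [c1 c2]]; split.
- apply: two_part_part; first by apply/set0Pn; exists i.
  by apply/negP => /eqP hT; move: hk; rewrite hT inE.
- by exists x => B; rewrite !inE => /orP [] /eqP ->.
Qed.

Lemma Dt_rep1 a b : Dt (p a) (p b) (p a) = 0. Proof. rewrite /Dt; ring. Qed.
Lemma Dt_rep2 a b : Dt (p a) (p b) (p b) = 0. Proof. rewrite /Dt; ring. Qed.

Lemma pinj a b : p a = p b -> a = b. Proof. exact: gp.1. Qed.

Lemma NR1 (C : {set 'I_n}) u v x :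
  (forall m, m \in C -> 0 <= D3 u v m) -> (forall m, m \notin C -> D3 u v m < 0) ->
  in_conv p C x -> in_conv p (~: C) x -> False.
Proof.
move=> h1 h2 c1 c2.
have h2' : forall m, m \in ~: C -> Dt (p u) (p v) (p m) <= 0.
  by move=> m; rewrite inE => hm; apply: ltW; apply: h2.
have [_ z2] := sep_main h1 h2' c1 c2.
apply: (conv_empty z2) => m; rewrite !inE negb_and; apply/orP.
case: (boolP (m \in C)) => hm; [by left| right].
by rewrite oppr_eq0 lt_eqF // h2.
Qed.

Lemma NR2 (C : {set 'I_n}) u v x za zb :
  (forall m, m \in C -> 0 <= D3 u v m) -> (forall m, m \notin C -> D3 u v m <= 0) ->
  (forall m, m \in C -> D3 u v m = 0 -> m = za) ->
  (forall m, m \notin C -> D3 u v m = 0 -> m = zb) -> za != zb ->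
  in_conv p C x -> in_conv p (~: C) x -> False.
Proof.
move=> h1 h2 h3 h4 hz c1 c2.
have h2' : forall m, m \in ~: C -> Dt (p u) (p v) (p m) <= 0.
  by move=> m; rewrite inE => hm; apply: h2.
have [z1 z2] := sep_main h1 h2' c1 c2.
have e1 : x = p za.
  by apply: (conv_single z1) => m; rewrite inE => /andP [hm /eqP]; apply: h3.
have e2 : x = p zb.
  by apply: (conv_single z2) => m; rewrite !inE oppr_eq0 => /andP [hm /eqP]; apply: h4.
by move: hz; rewrite -(inj_eq pinj) -e1 -e2 eqxx.
Qed.

Lemma memtg m x0 : (m \in tg Aset x0) = ((m \in Aset) != (m == x0)).
Proof. by rewrite /tg in_set. Qed.

Lemma cases4 m : [\/ m = i, m = j, m = k | m \in Wset].
Proof.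
case: (eqVneq m i) => [->|h1]; first by constructor 1.
case: (eqVneq m j) => [->|h2]; first by constructor 2.
case: (eqVneq m k) => [->|h3]; first by constructor 3.
by constructor 4; rewrite inW h1 h2 h3.
Qed.

Lemma inWtg m x0 : m \in Wset -> x0 \notin Wset -> (m \in tg Aset x0) = (m \in Aset).
Proof.
rewrite !inW => /and3P [h1 h2 h3]; rewrite !negb_and !negbK memtg => hx.
by case/or3P: hx => /eqP ->; rewrite ?(negbTE h1) ?(negbTE h2) ?(negbTE h3); case: (m \in Aset).
Qed.

Lemma Dkji : D3 k j i < 0.
Proof. have -> : D3 k j i = - D3 i j k by rewrite /D3 /Dt; ring. by rewrite oppr_lt0 hDijk. Qed.
Lemma Dikj : D3 i k j < 0.
Proof. have -> : D3 i k j = - D3 i j k by rewrite /D3 /Dt; ring. by rewrite oppr_lt0 hDijk. Qed.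

Lemma ji : j != i. Proof. by rewrite eq_sym hij. Qed.
Lemma ki : k != i. Proof. by rewrite eq_sym hik. Qed.
Lemma kj : k != j. Proof. by rewrite eq_sym hjk. Qed.

Ltac memsimp := rewrite ?memtg ?iA ?jA ?(negbTE kA) ?eqxx ?(negbTE ji) ?(negbTE ki)
  ?(negbTE kj) ?(negbTE hij) ?(negbTE hik) ?(negbTE hjk) /=.

Lemma Wnot x0 : x0 \in [:: i; j; k] -> x0 \notin Wset.
Proof. by rewrite inW !inE => /or3P [] /eqP ->; rewrite eqxx ?andbF. Qed.

Lemma Wi m : m \in Wset -> m != i. Proof. by rewrite inW => /and3P []. Qed.
Lemma Wj m : m \in Wset -> m != j. Proof. by rewrite inW => /and3P []. Qed.
Lemma Wk m : m \in Wset -> m != k. Proof. by rewrite inW => /and3P []. Qed.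

Ltac closer := move=> *; first [done | (exfalso; lra) | lra].

Lemma flip_i : ~ radon_partition p (part (tg Aset i)).
Proof.
move=> [_ [x hx']].
have c1 : in_conv p (tg Aset i) x by apply: hx'; rewrite !inE eqxx.
have c2 : in_conv p (~: tg Aset i) x by apply: hx'; rewrite !inE eqxx orbT.
have d1 := Dkji; have d2 := Dikj; have d3 := hDijk; rewrite /D3 in d1 d2 d3.
apply: (NR2 (u := k) (v := j) (za := j) (zb := k) _ _ _ _ hjk c1 c2).
all: move=> m;
  case: (cases4 m) => [->|->|->|hm]; [ | | |
    rewrite ?memtg ?(negbTE (Wi hm)) ?(negbTE (Wj hm)) ?(negbTE (Wk hm));
    case: (sgnW hm) => [[hA [a1 a2 a3]]|[hA [a1 a2 a3]]]; rewrite ?hA ?(negbTE hA) /=;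
    rewrite /D3 in a1 a2 a3 *; closer].
all: memsimp; rewrite /D3 ?Dt_rep1 ?Dt_rep2; closer.
Qed.

Lemma flip_j : ~ radon_partition p (part (tg Aset j)).
Proof.
move=> [_ [x hx']].
have c1 : in_conv p (tg Aset j) x by apply: hx'; rewrite !inE eqxx.
have c2 : in_conv p (~: tg Aset j) x by apply: hx'; rewrite !inE eqxx orbT.
have d1 := Dkji; have d2 := Dikj; have d3 := hDijk; rewrite /D3 in d1 d2 d3.
apply: (NR2 (u := i) (v := k) (za := i) (zb := k) _ _ _ _ hik c1 c2).
all: move=> m;
  case: (cases4 m) => [->|->|->|hm]; [ | | |
    rewrite ?memtg ?(negbTE (Wi hm)) ?(negbTE (Wj hm)) ?(negbTE (Wk hm));
    case: (sgnW hm) => [[hA [a1 a2 a3]]|[hA [a1 a2 a3]]]; rewrite ?hA ?(negbTE hA) /=;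
    rewrite /D3 in a1 a2 a3 *; closer].
all: memsimp; rewrite /D3 ?Dt_rep1 ?Dt_rep2; closer.
Qed.

Lemma flip_k : ~ radon_partition p (part (tg Aset k)).
Proof.
move=> [_ [x hx']].
have c1 : in_conv p (tg Aset k) x by apply: hx'; rewrite !inE eqxx.
have c2 : in_conv p (~: tg Aset k) x by apply: hx'; rewrite !inE eqxx orbT.
have d1 := Dkji; have d2 := Dikj; have d3 := hDijk; rewrite /D3 in d1 d2 d3.
apply: (NR1 (u := i) (v := j) _ _ c1 c2).
all: move=> m;
  case: (cases4 m) => [->|->|->|hm]; [ | | |
    rewrite ?memtg ?(negbTE (Wi hm)) ?(negbTE (Wj hm)) ?(negbTE (Wk hm));
    case: (sgnW hm) => [[hA [a1 a2 a3]]|[hA [a1 a2 a3]]]; rewrite ?hA ?(negbTE hA) /=;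
    rewrite /D3 in a1 a2 a3 *; closer].
all: memsimp; rewrite /D3 ?Dt_rep1 ?Dt_rep2; closer.
Qed.

Lemma cardW : #|Wset| = (n - 3)%N.
Proof.
rewrite /Wset cardsCs setCK card_ord -setUA cardsU1 cards2 !inE negb_or hij hik hjk.
by [].
Qed.

Lemma W_other x : exists2 y, y \in Wset & y != x.
Proof.
have : (1 < #|Wset|)%N by rewrite cardW; lia.
move=> /card_gt1P [y1 [y2 [h1 h2 h12]]].
case: (eqVneq y1 x) => [e|hne]; last by exists y1.
by exists y2 => //; rewrite -e eq_sym.
Qed.

Lemma tg_in x : x \in Wset -> [/\ i \in tg Aset x, j \in tg Aset x & k \notin tg Aset x].
Proof.
move=> hx; rewrite !memtg iA jA (negbTE kA).
by rewrite !(eq_sym _ x) (negbTE (Wi hx)) (negbTE (Wj hx)) (negbTE (Wk hx)).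
Qed.

Lemma radon_tg x : x \in Wset -> radon_partition p (part (tg Aset x)).
Proof.
move=> hx; have [hi hj hk] := tg_in hx.
apply: radon_part => //.
have [y hy hyx] := W_other x.
by apply: (radonC hi hj hk hy); rewrite memtg (negbTE hyx); case: (y \in Aset).
Qed.

Lemma final_main : exists P : {set {set 'I_n}},
    radon_partition p P /\
    exists N : {set {set {set 'I_n}}},
      #|N| = (n - 3)%N /\ (forall Q, Q \in N <-> radon_adj p P Q).
Proof.
have hn1 : (1 < n)%N by lia.
exists (part Aset); split.
  apply: radon_part; [exact: iA | exact: kA |].
  have [y hy _] := W_other i.
  exact: (radonC iA jA kA hy).
exists [set part (tg Aset x) | x in Wset]; split.
  rewrite card_in_imset ?cardW // => x y hx hy /= hxy.
  have : tg Aset x \in part (tg Aset y) by rewrite -hxy !inE eqxx.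
  rewrite !inE => /orP [] /eqP /setP.
  - case: (eqVneq x y) => // hne /(_ x); rewrite !memtg eqxx (negbTE hne).
    by case: (x \in Aset).
  - move=> /(_ i); rewrite in_setC !memtg iA !(eq_sym i) (negbTE (Wi hx)) (negbTE (Wi hy)).
    by [].
move=> Q; split.
- move=> /imsetP [x hx ->]; split; first exact: radon_tg.
  exact: pd_flip.
- move=> [hR hd].
  have [C hC] := two_part_inv hR.1.
  have hd' : pdist (part Aset) (part C) = 1%N by rewrite -hC.
  have [x hx] := pd_inv hn1 hd'.
  rewrite hC hx.
  case: (boolP (x \in Wset)) => hxW; first by apply: imset_f.
  exfalso; move: hxW; rewrite inW !negb_and !negbK => /or3P [] /eqP hx0; subst x.
  + by apply: flip_i; rewrite -hx -hC.
  + by apply: flip_j; rewrite -hx -hC.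
  + by apply: flip_k; rewrite -hx -hC.
Qed.

End Final.

Lemma main_sec : exists P : {set {set 'I_n}},
    radon_partition p P /\
    exists N : {set {set {set 'I_n}}},
      #|N| = (n - 3)%N /\ (forall Q, Q \in N <-> radon_adj p P Q).
Proof. have [i [j [k hc]]] := core_exists. exact: (final_main hc). Qed.

End Main.

Local Close Scope ring_scope.

Theorem proposition4p2 (R : realType) (n : nat) (p : 'I_n -> 'rV[R]_2) :
  (4 < n)%N -> general_position p ->
  exists P : {set {set 'I_n}},
    radon_partition p P /\
    exists N : {set {set {set 'I_n}}},
      #|N| = (n - 3)%N /\ (forall Q, Q \in N <-> radon_adj p P Q).
Proof. move=> hn gp; exact: (main_sec hn gp). Qed.
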